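(* Let $\mu\in GF(q)\setminus\{0\}$ with $b:=\mu^2\neq1$, and let $(s,c)$ be either $\left(\frac{1+\mu}2,\left(\frac{1-\mu}2\right)^2\right)$ or $\left(\frac{1-\mu}2,\left(\frac{1+\mu}2\right)^2\right)$. Suppose that for some $P,Q\in\mathcal B_1$ with $P\neq Q$ the circles $\mathcal B^1_{(sP,c)}$ and $\mathcal B^1_{(sQ,c)}$ are tangential. Let $k$ be the multiplicative order of $Q\bar P$ in $GF(q^2)^\times$. Then $3\le k\le q+1$, and for every $R\in\mathcal B_1$ the circles $$\mathcal B^1_{(sR,c)},\ \mathcal B^1_{(sR(Q\bar P),c)},\ \mathcal B^1_{(sR(Q\bar P)^2,c)},\ \dots,\ \mathcal B^1_{(sR(Q\bar P)^{k-1},c)}$$ form a Steiner chain of length $k$ for $\mathcal B_1$ and $\mathcal B_b$. In particular, a Steiner chain of the same length $k$ can be constructed starting with any circle of $\{\mathcal B^1_{(sR,c)}:R\in\mathcal B_1\}$.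
   Context: Let $p$ be an odd prime, $m\ge1$, and $q=p^m$. $GF(q^2)$ denotes the quadratic extension of $GF(q)$, and for $z\in GF(q^2)$ we write $\bar z:=z^{q}$. The Miquelian Möbius plane $\mathbb M(q)$ has point set $GF(q^2)\cup\{\infty\}$; its circles of the first type are $\mathcal B^1_{(s,c)}=\{z\in GF(q^2):(z-s)(\bar z-\bar s)=c\}$ for $s\in GF(q^2)$, $c\in GF(q)\setminus\{0\}$ (circles of the second type are $\{z:\bar s z+s\bar z=c\}\cup\{\infty\}$ for $s\neq0$, $c\in GF(q)$). Two circles are called tangential if they have exactly one point in common. For $a\in GF(q)\setminus\{0\}$ put $\mathcal B_a:=\mathcal B^1_{(0,a)}$, and let $\tau(1,b)$ be the set of circles tangential to both $\mathcal B_1$ and $\mathcal B_b$. A Steiner chain of length $k\ge3$ for $\mathcal B_1$ and $\mathcal B_b$ is a sequence of $k$ pairwise distinct circles $T_1,\dots,T_k\in\tau(1,b)$ such that $T_i$ and $T_{i+1}$ are tangential for $i=1,\dots,k-1$ and $T_k$ and $T_1$ are tangential. *)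

(* Defs.v *)
(* GF(q^2) is modelled as an arbitrary finite field L with
   #|L| = q^2, q = p^m; GF(q) is its subfield {z | z^q = z}; conj z = z^q. *)
From HB Require Import structures.
From mathcomp Require Import all_boot all_order all_algebra all_field.
Set Implicit Arguments. Unset Strict Implicit. Unset Printing Implicit Defensive.
Import Order.TTheory GRing.Theory.
Local Open Scope ring_scope.

Section Mobius.
Variables (L : finFieldType) (q : nat).

Definition conjq (z : L) : L := z ^+ q.

Definition inGFq (z : L) : bool := z ^+ q == z.

(* points of M(q): Some z for z in GF(q^2), None for infinity *)
Definition point := option L.

Definition circ1 (s c : L) : {set point} :=
  [set x : point | if x is Some z then (z - s) * conjq (z - s) == c else false].

Definition circ2 (s c : L) : {set point} :=
  [set x : point | if x is Some z then conjq s * z + s * conjq z == c else true].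

Definition is_circle (C : {set point}) : Prop :=
  (exists s c, inGFq c /\ c != 0 /\ C = circ1 s c) \/
  (exists s c, s != 0 /\ inGFq c /\ C = circ2 s c).

Definition tangential (C D : {set point}) : Prop := #|C :&: D| = 1%N.

Definition Bc (a : L) : {set point} := circ1 0 a.

Definition in_tau (b : L) (C : {set point}) : Prop :=
  is_circle C /\ tangential C (Bc 1) /\ tangential C (Bc b).

Definition steiner_chain (b : L) (k : nat) (T : nat -> {set point}) : Prop :=
  (3 <= k)%N /\
  (forall i, (i < k)%N -> in_tau b (T i)) /\
  (forall i j, (i < k)%N -> (j < k)%N -> T i = T j -> i = j) /\
  (forall i, (i.+1 < k)%N -> tangential (T i) (T i.+1)) /\
  tangential (T k.-1) (T 0%N).

End Mobius.

(* Main.v *)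
Require Import Defs.
From HB Require Import structures.
From mathcomp Require Import all_boot all_order all_algebra all_field.
From mathcomp Require Import ring.
Import GRing.Theory.
Set Implicit Arguments.
Local Open Scope ring_scope.

Section Core.
Variables (L : finFieldType) (q : nat).
Hypothesis hchar : ([pchar L]%R).-nat q.
Hypothesis hq : (0 < q)%N.
Hypothesis h2 : (2%:R : L) != 0.
Local Notation cj := (@conjq L q).

Lemma cjD x y : cj (x + y) = cj x + cj y.
Proof. by rewrite /conjq exprDn_pchar. Qed.
Lemma cjM x y : cj (x * y) = cj x * cj y.
Proof. by rewrite /conjq exprMn. Qed.
Lemma cj0 : cj 0 = 0.
Proof. by rewrite /conjq expr0n; case: q hq. Qed.
Lemma cj1 : cj 1 = 1.
Proof. by rewrite /conjq expr1n. Qed.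
Lemma cjN x : cj (- x) = - cj x.
Proof. by apply/eqP; rewrite -addr_eq0 -cjD addrC subrr cj0. Qed.
Lemma cjB x y : cj (x - y) = cj x - cj y.
Proof. by rewrite cjD cjN. Qed.
Lemma cjV x : cj (x^-1) = (cj x)^-1.
Proof. by rewrite /conjq exprVn. Qed.
Lemma cj2 : cj 2%:R = 2%:R.
Proof. by rewrite -[2%:R]/(1 + 1) cjD cj1. Qed.
Lemma cj_eq0 x : cj x = 0 -> x = 0.
Proof. by move/eqP; rewrite /conjq expf_eq0 => /andP[_ /eqP]. Qed.

Variable nu : L.
Hypothesis hnu : cj nu = nu.
Hypothesis hnu0 : nu != 0.
Hypothesis hnu1 : nu != 1.
Hypothesis hnum1 : nu != -1.
Let s := (1 + nu) / 2%:R.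
Let c := ((1 - nu) / 2%:R) ^+ 2.

Lemma s0 : s != 0.
Proof.
rewrite /s mulf_eq0 invr_eq0 negb_or h2 andbT addr_eq0.
by apply: contra hnum1 => /eqP h; rewrite -[nu]opprK -h.
Qed.

Lemma cjs : cj s = s.
Proof. by rewrite /s cjM cjV cjD cj1 cj2 hnu. Qed.

Lemma capB1 R : R * cj R = 1 -> circ1 q (s * R) c :&: Bc q 1 = [set Some R].
Proof.
move=> hR; apply/setP => -[z|]; rewrite !inE //=.
rewrite !subr0 cjB (cjM s) cjs.
apply/andP/eqP => [[/eqP h1 /eqP hz]|[->]].
- congr Some.
  have e : s * ((z - R) * (cj z - cj R)) = s*(z*cj z) + s*(R*cj R) - z*cj z
     - s^+2*(R * cj R) + (z - s*R)*(cj z - s*cj R) by ring.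
  rewrite h1 hz hR /s /c in e.
  have : s * ((z - R) * (cj z - cj R)) == 0 by rewrite e; apply/eqP; field.
  rewrite mulf_eq0 (negbTE s0) /= mulf_eq0 -cjB.
  by case/orP => [|/eqP/cj_eq0/eqP]; rewrite subr_eq0 => /eqP.
- split; last by rewrite hR. apply/eqP.
  have -> : (R - s*R)*(cj R - s*cj R) = (1-s)^+2 * (R*cj R) by ring.
  by rewrite hR /s /c; field.
Qed.

Lemma capBb R : R * cj R = 1 ->
  circ1 q (s * R) c :&: Bc q (nu ^+ 2) = [set Some (nu * R)].
Proof.
move=> hR; apply/setP => -[z|]; rewrite !inE //=.
rewrite !subr0 cjB (cjM s) cjs.
apply/andP/eqP => [[/eqP h1 /eqP hz]|[->]].
- congr Some.
  have e : s * ((z - nu * R) * (cj z - nu * cj R)) = s*(z*cj z)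
     - nu * (z * cj z + s^+2 * (R * cj R) - (z - s*R)*(cj z - s*cj R))
     + s * nu^+2 * (R * cj R) by ring.
  rewrite h1 hz hR /s /c in e.
  have : s * ((z - nu * R) * (cj z - nu * cj R)) == 0
    by rewrite e; apply/eqP; field.
  rewrite mulf_eq0 (negbTE s0) /= mulf_eq0 -{2}hnu -cjM -cjB.
  by case/orP => [|/eqP/cj_eq0/eqP]; rewrite subr_eq0 => /eqP.
- rewrite cjM hnu.
  have -> : (nu * R - s*R)*(nu * cj R - s*cj R) = (nu-s)^+2 * (R*cj R) by ring.
  have -> : nu * R * (nu * cj R) = nu ^+ 2 * (R * cj R) by ring.
  split; last by rewrite hR mulr1. apply/eqP.
  by rewrite hR mulr1 /s /c; field.
Qed.

Lemma c0 : c != 0.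
Proof.
rewrite /c expf_eq0 /= mulf_eq0 invr_eq0 negb_or h2 andbT subr_eq0.
by rewrite eq_sym.
Qed.

Lemma cjc : cj c = c.
Proof. by rewrite /c /conjq -exprM mulnC exprM -/(cj _) cjM cjV cjB cj1 cj2 hnu. Qed.

Lemma Nmul x y : (x * y) * cj (x * y) = (x * cj x) * (y * cj y).
Proof. by rewrite cjM; ring. Qed.

Lemma Nexp x i : x ^+ i * cj (x ^+ i) = (x * cj x) ^+ i.
Proof. by rewrite /conjq exprAC exprMn. Qed.

Lemma rot_card (u a a' c' : L) : u * cj u = 1 ->
  #|circ1 q (u * a) c' :&: circ1 q (u * a') c'| =
  #|circ1 q a c' :&: circ1 q a' c'|.
Proof.
move=> hu; have u0 : u != 0 by apply/eqP => u0; move: hu; rewrite u0 mul0r => /eqP; rewrite eq_sym oner_eq0.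
pose f := omap (fun z => u^-1 * z).
have finj : injective f by apply: inj_omap; apply: mulfI; rewrite invr_eq0.
have E b : circ1 q (u * b) c' = f @^-1: circ1 q b c'.
  apply/setP => -[z|]; rewrite !inE //=.
  rewrite (_ : z - u * b = u * (u^-1 * z - b)); last by rewrite mulrBr mulVKf.
  by rewrite cjM mulrACA hu mul1r.
by rewrite !E -preimsetI card_preimset.
Qed.

Lemma nontang a : a * cj a != c -> ~ tangential (circ1 q a c) (circ1 q (- a) c).
Proof.
move=> ha; rewrite /tangential => /eqP/cards1P[x hx].
have : x \in circ1 q a c :&: circ1 q (- a) c by rewrite hx set11.
case: x hx => [z|] hx; last by rewrite !inE.
move=> hz.
have hz' : Some (- z) \in circ1 q a c :&: circ1 q (- a) c.
  move: hz; rewrite !inE /= !cjB !cjN.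
  have -> : (- z - a) * (- cj z - cj a) = (z - - a) * (cj z - - cj a) by ring.
  have -> : (- z - - a) * (- cj z - - cj a) = (z - a) * (cj z - cj a) by ring.
  by rewrite andbC.
move: hz'; rewrite hx inE => /eqP [] /eqP; rewrite eq_sym -addr_eq0.
rewrite -mulr2n -mulr_natr mulf_eq0 (negbTE h2) orbF => /eqP z0.
move: hz; rewrite z0 !inE => /andP[+ _]; rewrite sub0r cjN mulrNN.
by rewrite (negbTE ha).
Qed.

Lemma core P Q k (hP : P * cj P = 1) (hQ : Q * cj Q = 1) (hPQ : P != Q)
  (htang : tangential (circ1 q (s * P) c) (circ1 q (s * Q) c))
  (hk : k.-primitive_root (Q * cj P)) :
  (3 <= k <= q.+1)%N /\
  forall R : L, R * cj R = 1 ->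
    steiner_chain q (nu ^+ 2) k (fun i => circ1 q (s * R * (Q * cj P) ^+ i) c).
Proof.
set w := Q * cj P.
have hcP : cj P * cj (cj P) = 1 by rewrite -cjM hP cj1.
have hw : w * cj w = 1 by rewrite Nmul hQ hcP mulr1.
have hwq : w ^+ q.+1 = 1 by rewrite exprS.
have Qw : Q = w * P by rewrite /w -mulrA (mulrC _ P) hP mulr1.
have k0 := prim_order_gt0 hk.
have k3 : (3 <= k)%N.
  case: k hk k0 => [|[|[|k]]] // hk _.
  - move: (prim_expr_order hk); rewrite expr1 => w1.
    by move: hPQ; rewrite Qw /w w1 mul1r eqxx.
  - have w1 : w != 1.
      by move: (prim_order_dvd hk 1); rewrite expr1 => <-.
    have : (w - 1) * (w + 1) == 0.
      rewrite (_ : (w-1)*(w+1) = w^+2 - 1); last by ring.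
      by rewrite /w (prim_expr_order hk) subrr.
    rewrite mulf_eq0 subr_eq0 (negbTE w1) /= addr_eq0 => /eqP wm1.
    exfalso; apply: (@nontang (s * P)).
      rewrite Nmul hP mulr1 cjs -subr_eq0.
      have -> : s * s - c = nu by rewrite /s /c; field.
      exact: hnu0.
    by rewrite -mulrN -mulN1r -wm1 -Qw.
have hkq : (k <= q.+1)%N by apply: dvdn_leq => //; rewrite (prim_order_dvd hk) hwq.
split; first by rewrite k3 hkq.
move=> R hR.
have hRw i : (R * w ^+ i) * cj (R * w ^+ i) = 1 by rewrite Nmul Nexp hR hw expr1n mulr1.
have tang i : tangential (circ1 q (s * R * w ^+ i) c) (circ1 q (s * R * w ^+ i.+1) c).
  pose u := R * w ^+ i * cj P.
  have hu : u * cj u = 1 by rewrite /u Nmul hRw hcP mulr1.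
  rewrite /tangential -htang -(rot_card u (s * P) (s * Q) c hu); congr (#|circ1 q _ c :&: circ1 q _ c|).
  - by rewrite /u -(mulr1 (s * R * _)) -hP; ring.
  - by rewrite /u exprSr /w; ring.
have R0 : R != 0 by apply/eqP => u0; move: hR; rewrite u0 mul0r => /eqP; rewrite eq_sym oner_eq0.
split=> //; split.
  move=> i _; split.
    by left; exists (s * R * w ^+ i), c; split; [apply/eqP; exact: cjc | split; [exact: c0|]].
  by rewrite /tangential -mulrA capB1 ?cards1 // capBb ?cards1.
split.
  move=> i j hi hj E; have := congr1 (fun X => X :&: Bc q 1) E.
  rewrite /= -!(mulrA s) !capB1 // => /setP/(_ (Some (R * w ^+ i))); rewrite !inE eqxx.
  move=> /esym/eqP [] /(mulfI R0) /eqP; rewrite (eq_prim_root_expr hk) !modn_small //.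
  by move/eqP.
split; first by move=> i _; exact: tang.
have := tang k.-1; rewrite prednK // (prim_expr_order hk) -(expr0 w) //.
Qed.

End Core.

Theorem mainTheorem8 (p m : nat) (L : finFieldType)
  (hp : prime p) (hodd : odd p) (hm : (0 < m)%N)
  (hcard : #|L| = ((p ^ m) ^ 2)%N)
  (mu : L) (hmuF : inGFq (p ^ m) mu) (hmu0 : mu != 0)
  (b : L) (hb : b = mu ^+ 2) (hb1 : b != 1)
  (s c : L)
  (hsc : (s = (1 + mu) / 2%:R /\ c = ((1 - mu) / 2%:R) ^+ 2) \/
         (s = (1 - mu) / 2%:R /\ c = ((1 + mu) / 2%:R) ^+ 2))
  (P Q : L)
  (hP : Some P \in Bc (p ^ m) 1) (hQ : Some Q \in Bc (p ^ m) 1) (hPQ : P != Q)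
  (htang : tangential (circ1 (p ^ m) (s * P) c) (circ1 (p ^ m) (s * Q) c))
  (k : nat) (hk : k.-primitive_root (Q * conjq (p ^ m) P)) :
  (3 <= k <= (p ^ m).+1)%N /\
  forall R : L, Some R \in Bc (p ^ m) 1 ->
    steiner_chain (p ^ m) b k
      (fun i => circ1 (p ^ m) (s * R * (Q * conjq (p ^ m) P) ^+ i) c).
Proof.
have hpc : p \in [pchar L]%R by apply: card_finPcharP hp; rewrite hcard -expnM.
have hchar : ([pchar L]%R).-nat (p ^ m)%N by rewrite pnatX (pnatE _ hp) hpc.
have hq : (0 < p ^ m)%N by rewrite expn_gt0 prime_gt0.
have h2 : (2%:R : L) != 0.
  rewrite -(dvdn_pcharf hpc); apply/negP => /(dvdn_leq (isT : (0 < 2)%N)).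
  by move: (prime_gt1 hp) hodd; case: (p) => [|[|[|]]].
have hmu : conjq (p ^ m) mu = mu by apply/eqP.
have cjN (x : L) : conjq (p ^ m) (- x) = - conjq (p ^ m) x by exact: (@cjN L _ hchar hq x).
have hin (X : L) : Some X \in Bc (p ^ m) 1 -> X * conjq (p ^ m) X = 1.
  by rewrite inE subr0 => /eqP.
have [nu [hnu hnu0 hnu1 hnum1 [hs hc hbnu]]] : exists nu : L,
    [/\ conjq (p ^ m) nu = nu, nu != 0, nu != 1, nu != -1 &
     [/\ s = (1 + nu) / 2%:R, c = ((1 - nu) / 2%:R) ^+ 2 & b = nu ^+ 2]].
  have n1 : mu != 1 by apply: contra hb1 => /eqP m1; rewrite hb m1 expr1n.
  have nm1 : mu != -1 by apply: contra hb1 => /eqP m1; rewrite hb m1 sqrrN expr1n.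
  case: hsc => [[-> ->]|[-> ->]].
    by exists mu; split=> //; split.
  exists (- mu); split.
  - by rewrite cjN hmu.
  - by rewrite oppr_eq0.
  - by apply: contra nm1 => /eqP <-; rewrite opprK.
  - by apply: contra n1 => /eqP h; rewrite -[mu]opprK h opprK.
  by split; rewrite ?opprK ?sqrrN.
subst s c; rewrite hbnu.
have [k3 hch] := core hchar hq h2 hnu hnu0 hnu1 hnum1 P Q k (hin _ hP) (hin _ hQ) hPQ htang hk.
by split=> // R /hin; apply: hch.
Qed.
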